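(* The following are equivalent: (i) there exists a decomposition of $V$ which is split with respect to the orderings $E_0,\ldots,E_d$ and $E^*_0,\ldots,E^*_d$; (ii) for all $0\le i,j\le d$: $E^*_iAE^*_j=0$ if $i-j>1$ and $E^*_iAE^*_j\ne0$ if $i-j=1$; and $E_iA^*E_j=0$ if $j-i>1$ and $E_iA^*E_j\ne0$ if $j-i=1$.
   Context: Let $\mathbb K$ be a field, $d\ge 0$ an integer, and $\mathcal A$ a $\mathbb K$-algebra isomorphic to $\mathrm{Mat}_{d+1}(\mathbb K)$, with identity $I$. An element of $\mathcal A$ is multiplicity-free if it has $d+1$ mutually distinct eigenvalues, all in $\mathbb K$; for such $A$ with eigenvalues $\theta_0,\ldots,\theta_d$, the primitive idempotent associated with $\theta_i$ is $E_i=\prod_{j\ne i}(A-\theta_jI)/(\theta_i-\theta_j)$. Standing setup: $A,A^*$ are multiplicity-free elements of $\mathcal A$ ($A^*$ is just a name, not an adjoint); $E_0,\ldots,E_d$ is an ordering of the primitive idempotents of $A$ and $\theta_i$ is the eigenvalue of $A$ for $E_i$; $E^*_0,\ldots,E^*_d$ is an ordering of the primitive idempotents of $A^*$ and $\theta^*_i$ is the eigenvalue of $A^*$ for $E^*_i$; $V$ is an irreducible left $\mathcal A$-module. A decomposition of $V$ is a sequence $U_0,\ldots,U_d$ of 1-dimensional subspaces with $V=U_0+\cdots+U_d$ (direct sum). Such a decomposition is split (with respect to the orderings $E_0,\ldots,E_d$ and $E^*_0,\ldots,E^*_d$) if $(A-\theta_iI)U_i=U_{i+1}$ for $0\le i\le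 d-1$, $(A-\theta_dI)U_d=0$, $(A^*-\theta^*_iI)U_i=U_{i-1}$ for $1\le i\le d$, and $(A^*-\theta^*_0I)U_0=0$. *)

(* Defs.v *)
From HB Require Import structures.
From mathcomp Require Import all_boot all_order all_algebra.
Set Implicit Arguments. Unset Strict Implicit. Unset Printing Implicit Defensive.
Import GRing.Theory.
Local Open Scope ring_scope.

(* The algebra is realized as 'M[K]_(d.+1); the irreducible left module V is
   K^(d+1) (column vectors).  We represent vectors of V as ROW vectors, so the
   left action  v |-> M v  becomes  v |-> v *m M^T, and subspaces of V are
   row spaces (mxalgebra, %MS). *)

Definition act (K : fieldType) (n : nat) (M U : 'M[K]_n) : 'M[K]_n := U *m M^T.

Definition mult_free_ordering (K : fieldType) (d : nat)
  (A : 'M[K]_(d.+1)) (th : 'I_(d.+1) -> K) : Prop :=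
  injective th /\ forall i, eigenvalue A (th i).

Definition prim_idem (K : fieldType) (d : nat)
  (A : 'M[K]_(d.+1)) (th : 'I_(d.+1) -> K) (i : 'I_(d.+1)) : 'M[K]_(d.+1) :=
  \prod_(j < d.+1 | j != i) ((th i - th j)^-1 *: (A - (th j)%:M)).

Definition is_decomposition (K : fieldType) (d : nat)
  (U : 'I_(d.+1) -> 'M[K]_(d.+1)) : Prop :=
  (forall i, \rank (U i) = 1%N) /\
  mxdirect (\sum_i U i) /\ (\sum_i U i == 1%:M)%MS.

Definition is_split (K : fieldType) (d : nat) (A As : 'M[K]_(d.+1))
  (th ths : 'I_(d.+1) -> K) (U : 'I_(d.+1) -> 'M[K]_(d.+1)) : Prop :=
  (forall i : 'I_(d.+1), (i < d)%N ->
     (act (A - (th i)%:M) (U i) == U (inord i.+1))%MS) /\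
  (act (A - (th ord_max)%:M) (U ord_max) == (0 : 'M[K]_(d.+1)))%MS /\
  (forall i : 'I_(d.+1), (0 < i)%N ->
     (act (As - (ths i)%:M) (U i) == U (inord i.-1))%MS) /\
  (act (As - (ths ord0)%:M) (U ord0) == (0 : 'M[K]_(d.+1)))%MS.

(* Main.v *)
Require Import Defs.
From HB Require Import structures.
From mathcomp Require Import all_boot all_order all_algebra zify.
Import GRing.Theory.
Local Open Scope ring_scope.

Section Idem.
Variables (K : fieldType) (d : nat).
Local Notation n := d.+1.

Definition ep (th : 'I_n -> K) (i : 'I_n) : {poly K} :=
  \prod_(j < n | j != i) ((th i - th j)^-1 *: ('X - (th j)%:P)).

Lemma pi_horner (M : 'M[K]_n) th i :
  prim_idem M th i = horner_mx M (ep th i).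
Proof.
rewrite /prim_idem /ep rmorph_prod; apply: eq_bigr => j _.
rewrite -[RHS]/(horner_mx M _) horner_mxZ rmorphB /= horner_mx_X horner_mx_C.
by [].
Qed.

Lemma ep_eval th (inj : injective th) i k : (ep th i).[th k] = (i == k)%:R.
Proof.
rewrite /ep horner_prod.
have [<-|nik] := eqVneq i k.
  rewrite big1 // => j ji; rewrite hornerZ hornerXsubC mulVf //.
  by rewrite subr_eq0; apply: contra ji => /eqP /inj ->.
by rewrite (bigD1 k) 1?eq_sym //= hornerZ hornerXsubC subrr mulr0 mul0r.
Qed.

Lemma horner_eig m (M : 'M[K]_n) (R : 'M[K]_(m, n)) mu p :
  R *m M = mu *: R -> R *m horner_mx M p = p.[mu] *: R.
Proof.
move=> HR; elim/poly_ind: p => [|p c IH].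
  by rewrite rmorph0 mulmx0 horner0 scale0r.
rewrite rmorphD rmorphM /= horner_mx_X horner_mx_C hornerMXaddC.
rewrite mulmxDr -mulmxE mulmxA IH -scalemxAl HR scalerA mul_mx_scalar.
by rewrite scalerDl.
Qed.

Lemma ep_X th i : ep th i * ('X - (th i)%:P) =
  (\prod_(j < n | j != i) (th i - th j)^-1) *: \prod_(j < n) ('X - (th j)%:P).
Proof.
rewrite /ep scaler_prod -scalerAl; congr (_ *: _).
by rewrite [RHS](bigD1 i) //= mulrC.
Qed.

Lemma prod_zero (M : 'M[K]_n) th : injective th -> (forall i, eigenvalue M (th i)) ->
  horner_mx M (\prod_(j < n) ('X - (th j)%:P)) = 0.
Proof.
move=> inj eig.
have H1 : all (root (char_poly M)) (map th (enum 'I_n)).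
  by apply/allP => x /mapP [j _ ->]; rewrite -eigenvalue_root_char.
have H2 : uniq_roots (map th (enum 'I_n)).
  by rewrite uniq_rootsE map_inj_uniq ?enum_uniq.
have [q Hq] := uniq_roots_prod_XsubC H1 H2.
have mon : \prod_(z <- map th (enum 'I_n)) ('X - z%:P) \is monic.
  exact: monic_prod_XsubC.
have q0 : q != 0.
  apply/eqP => q0; move: (char_poly_monic M); rewrite Hq q0 mul0r.
  by rewrite monicE lead_coef0 eq_sym oner_eq0.
have := size_char_poly M; rewrite Hq size_Mmonic // size_prod_XsubC size_map.
rewrite size_enum_ord addnS /= => /(congr1 (subn^~ d.+1)); rewrite addnK subSnn => /eqP.
case/size_poly1P => c c0 qc.
rewrite big_map big_enum /= in Hq.
have := Cayley_Hamilton M; rewrite Hq qc rmorphM /= horner_mx_C -mulmxE.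
rewrite mul_scalar_mx => /eqP; rewrite scalemx_eq0 (negPf c0) /= => /eqP.
by [].
Qed.

Lemma prodX_map (th : 'I_n -> K) : \prod_(j < n) ('X - (th j)%:P) =
   \prod_(z <- map th (enum 'I_n)) ('X - z%:P).
Proof. by rewrite big_map big_enum. Qed.

Lemma size_prodX (th : 'I_n -> K) : size (\prod_(j < n) ('X - (th j)%:P)) = n.+1.
Proof. by rewrite prodX_map size_prod_XsubC size_map size_enum_ord. Qed.

Lemma size_ep (th : 'I_n -> K) i : (size (ep th i) <= n)%N.
Proof.
have [->|e0] := eqVneq (ep th i) 0; first by rewrite size_poly0.
have := @size_scale_leq K (\prod_(j < n | j != i) (th i - th j)^-1)
   (\prod_(j < n) ('X - (th j)%:P)).
rewrite -ep_X size_Mmonic ?monicXsubC // size_XsubC size_prodX addn2 /=.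
by [].
Qed.

Lemma ep_sum (th : 'I_n -> K) : injective th -> \sum_i ep th i = 1.
Proof.
move=> inj; apply/eqP; rewrite -subr_eq0; apply/eqP.
set S := _ - 1.
have sS : (size S <= n)%N.
  rewrite /S; apply: leq_trans (size_polyD _ _) _; rewrite geq_max.
  rewrite size_polyN size_poly1 andbT.
  by elim/big_ind: _ => [|p q Hp Hq|j _]; rewrite ?size_poly0 ?size_ep //;
     apply: leq_trans (size_polyD _ _) _; rewrite geq_max Hp Hq.
apply/eqP/negPn/negP => S0.
have := max_poly_roots S0 (rs := map th (enum 'I_n)).
rewrite map_inj_uniq ?enum_uniq // size_map size_enum_ord.
have -> : all (root S) (map th (enum 'I_n)).
  apply/allP => x /mapP [k _ ->]; apply/rootP.
  rewrite /S hornerD hornerN horner_sum hornerC (bigD1 k) //= ep_eval // eqxx.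
  by rewrite big1 ?addr0 ?subrr // => j /negPf; rewrite ep_eval // => ->.
by move=> /(_ isT isT); rewrite ltnNge sS.
Qed.

Variables (M : 'M[K]_n) (th : 'I_n -> K).
Hypotheses (inj : injective th) (eig : forall i, eigenvalue M (th i)).
Local Notation E := (prim_idem M th).

Lemma pi_sum : \sum_i E i = 1.
Proof.
under eq_bigr do rewrite pi_horner.
by rewrite -rmorph_sum ep_sum // rmorph1.
Qed.

Lemma pi_zero i : E i *m (M - (th i)%:M) = 0.
Proof.
have H0 := prod_zero M th inj eig.
have H : horner_mx M (ep th i * ('X - (th i)%:P)) = 0.
  by rewrite ep_X horner_mxZ H0 scaler0.
by rewrite pi_horner -H rmorphM rmorphB /= horner_mx_X horner_mx_C.
Qed.

Lemma pi_zero' i : (M - (th i)%:M) *m E i = 0.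
Proof.
have H0 := prod_zero M th inj eig.
have H : horner_mx M (('X - (th i)%:P) * ep th i) = 0.
  by rewrite mulrC ep_X horner_mxZ H0 scaler0.
by rewrite pi_horner -H rmorphM rmorphB /= horner_mx_X horner_mx_C.
Qed.

Lemma pi_MX i : E i *m M = th i *: E i.
Proof.
by apply/eqP; rewrite -subr_eq0 -mul_mx_scalar -mulmxBr pi_zero.
Qed.

Lemma pi_XM i : M *m E i = th i *: E i.
Proof.
by apply/eqP; rewrite -subr_eq0 -mul_scalar_mx -mulmxBl pi_zero'.
Qed.

Lemma pidem_mul i j : E i *m E j = (j == i)%:R *: E i.
Proof. by rewrite [E j]pi_horner (@horner_eig _ _ _ _ (ep th j) (pi_MX i)) ep_eval. Qed.

Lemma pi_neq0 i : E i != 0.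
Proof.
have /eigenvalueP [v Hv v0] := eig i.
apply: contraNneq v0 => E0.
have := @horner_eig _ _ _ _ (ep th i) Hv; rewrite -pi_horner E0 mulmx0 ep_eval // eqxx.
by rewrite scale1r => <-.
Qed.

End Idem.

Section Fam.
Variables (K : fieldType) (d : nat).
Local Notation n := d.+1.
Variable P : 'I_n -> 'M[K]_n.
Hypotheses (HPs : \sum_i P i = 1%:M)
  (HPm : forall i j, P i *m P j = (i == j)%:R *: P i)
  (HP0 : forall i, P i != 0).

Lemma sub_idem m (w : 'M[K]_(m, n)) i : (w <= P i)%MS -> w *m P i = w.
Proof. by case/submxP => D ->; rewrite -mulmxA HPm eqxx scale1r. Qed.

Lemma decomp m (x : 'M[K]_(m, n)) : x = \sum_i x *m P i.
Proof. by rewrite -mulmx_sumr HPs mulmx1. Qed.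

Lemma rank_P i : \rank (P i) = 1%N.
Proof.
have dx : mxdirect (\sum_i P i).
  apply/mxdirect_sumsP => i0 _; apply/eqP; rewrite -submx0.
  set x := (_ :&: _)%MS.
  have x1 : x *m P i0 = x by apply: sub_idem; exact: capmxSl.
  have : (x <= \sum_(j | true && (j != i0)) P j)%MS by exact: capmxSr.
  case/sub_sumsmxP => D HD.
  rewrite -x1 {1}HD mulmx_suml big1 ?sub0mx // => j /andP [_ ji].
  by rewrite -mulmxA HPm (negPf ji) scale0r mulmx0.
have r1 : \rank (\sum_i P i)%MS = n.
  apply/eqP; rewrite eqn_leq rank_leq_col /=.
  have : (1%:M <= \sum_i P i)%MS.
    by rewrite -HPs; apply: summx_sub_sums => j _; exact: submx_refl.
  by move/mxrankS; rewrite mxrank1.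
move: dx; rewrite mxdirectE /= r1 => /eqP Hs.
have pos : forall j, (0 < \rank (P j))%N.
  by move=> j; rewrite lt0n mxrank_eq0 HP0.
have : (\sum_(j | j != i) 1 <= \sum_(j | j != i) \rank (P j))%N.
  by apply: leq_sum => j _; exact: pos.
rewrite sum1_card cardC1 card_ord /=.
move: Hs; rewrite (bigD1 i) //= => Hs.
have := pos i; lia.
Qed.

Lemma rank1_nz p (w : 'rV[K]_n) i (X : 'M[K]_(n, p)) : (w <= P i)%MS -> w != 0 ->
  P i *m X != 0 -> w *m X != 0.
Proof.
move=> wP w0; have := mxrank_leqif_sup wP.
rewrite rank_P rank_rV w0 => -[_ /esym]; rewrite eqxx => /submxP [D ->].
by apply: contraNneq => H; rewrite -mulmxA H mulmx0.
Qed.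

End Fam.

Section Basis.
Variables (K : fieldType) (d : nat).
Local Notation n := d.+1.
Variable u : 'I_n -> 'rV[K]_n.

Lemma span_of_indep :
  (forall c : 'I_n -> K, \sum_k c k *: u k = 0 -> forall k, c k = 0) ->
  forall v : 'rV[K]_n, exists c : 'I_n -> K, v = \sum_k c k *: u k.
Proof.
move=> Hind v; set C := \matrix_k u k.
have kC : kermx C = 0.
  apply/row_matrixP => r; rewrite row0; set x := row r (kermx C).
  have : x *m C = 0 by rewrite -row_mul mulmx_ker row0.
  rewrite mulmx_sum_row.
  under eq_bigr do rewrite rowK.
  move/Hind => H; apply/rowP => j; rewrite [RHS]mxE; exact: H.
have uC : C \in unitmx by rewrite -row_free_unit -kermx_eq0 kC.
exists (fun k => (v *m invmx C) 0 k).
rewrite -{1}(mulmxKV uC v) mulmx_sum_row.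
by apply: eq_bigr => k _; rewrite rowK.
Qed.

Lemma zero_of_span p (X : 'M[K]_(n, p)) :
  (forall v : 'rV[K]_n, exists c : 'I_n -> K, v = \sum_k c k *: u k) ->
  (forall l, u l *m X = 0) -> X = 0.
Proof.
move=> Hs Hu; apply/row_matrixP => r; rewrite row0 -[X]mul1mx row_mul.
have [c ->] := Hs (row r 1%:M).
by rewrite mulmx_suml big1 // => k _; rewrite -scalemxAl Hu scaler0.
Qed.

Lemma tri_down (Q : 'I_n -> 'M[K]_n) (c : 'I_n -> K) (j0 : nat) :
  (forall l k : 'I_n, (l < k)%N -> u l *m Q k = 0) ->
  (forall l, u l *m Q l != 0) ->
  (forall k : 'I_n, (j0 <= k)%N -> (\sum_l c l *: u l) *m Q k = 0) ->
  forall k : 'I_n, (j0 <= k)%N -> c k = 0.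
Proof.
move=> Hlt Hd Hz.
suff H : forall m, forall k : 'I_n, (j0 <= k)%N -> (n - k <= m)%N -> c k = 0.
  by move=> k jk; apply: (H n) => //; lia.
elim=> [|m IH] k jk km; first by have := ltn_ord k; lia.
have := Hz k jk; rewrite mulmx_suml (bigD1 k) //= big1 ?addr0.
  by move/eqP; rewrite -scalemxAl scalemx_eq0 (negPf (Hd k)) orbF => /eqP.
move=> l lk; rewrite -scalemxAl.
case: (ltngtP l k) => [lk'|kl|e].
- by rewrite Hlt ?scaler0.
- by rewrite IH ?scale0r //; lia.
- by move: lk; rewrite (val_inj e) eqxx.
Qed.

Lemma tri_up (Q : 'I_n -> 'M[K]_n) (c : 'I_n -> K) (j0 : nat) :
  (forall l k : 'I_n, (k < l)%N -> u l *m Q k = 0) ->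
  (forall l, u l *m Q l != 0) ->
  (forall k : 'I_n, (k < j0)%N -> (\sum_l c l *: u l) *m Q k = 0) ->
  forall k : 'I_n, (k < j0)%N -> c k = 0.
Proof.
move=> Hlt Hd Hz.
suff H : forall m, forall k : 'I_n, (k < j0)%N -> (k <= m)%N -> c k = 0.
  by move=> k jk; apply: (H k).
elim=> [|m IH] k jk km.
all: have := Hz k jk; rewrite mulmx_suml (bigD1 k) //= big1 ?addr0;
  [by move/eqP; rewrite -scalemxAl scalemx_eq0 (negPf (Hd k)) orbF => /eqP|].
all: move=> l lk; rewrite -scalemxAl.
all: case: (ltngtP l k) => [lk'|kl|e].
- by have := ltn_ord l; lia.
- by rewrite Hlt ?scaler0.
- by move: lk; rewrite (val_inj e) eqxx.
- by rewrite IH ?scale0r //; lia.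
- by rewrite Hlt ?scaler0.
- by move: lk; rewrite (val_inj e) eqxx.
Qed.
End Basis.

Lemma chain (K : fieldType) n (w : nat -> 'rV[K]_n) (M R : 'M[K]_n)
  (lam c : nat -> K) mu N :
  M *m R = mu *: R ->
  (forall l, (l < N)%N -> w l *m (M - (lam l)%:M) = c l *: w l.+1) ->
  (forall l, (l < N)%N -> c l != 0) ->
  forall l, (l <= N)%N ->
    w l *m R = (\prod_(m < l) ((mu - lam m) / c m)) *: (w 0 *m R).
Proof.
move=> HR Hw Hc; elim=> [|l IH] lN; first by rewrite big_ord0 scale1r.
have Hl : w l.+1 = (c l)^-1 *: (w l *m (M - (lam l)%:M)).
  by rewrite Hw // scalerA mulVf ?scale1r // Hc.
rewrite Hl -scalemxAl -mulmxA mulmxBl HR mul_scalar_mx -scalerBl.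
rewrite -scalemxAr IH 1?ltnW // big_ord_recr /= !scalerA; congr (_ *: _).
by rewrite [RHS]mulrC (mulrC (c l)^-1).
Qed.

Lemma nz_row (K : fieldType) m n (A : 'M[K]_(m, n)) : A != 0 -> exists r, row r A != 0.
Proof.
move=> A0; apply/existsP; apply: contraNT A0; rewrite negb_exists => /forallP H.
by apply/eqP/row_matrixP => r; rewrite row0; apply/eqP; move: (H r); rewrite negbK.
Qed.

Lemma gen_act (K : fieldType) n (x y : 'rV[K]_n) (M : 'M[K]_n) c :
  c != 0 -> x *m M = c *: y -> (<<x>> *m M == <<y>>)%MS.
Proof.
move=> c0 H; apply/andP; rewrite !(eqmxMr _ (genmxE _)) !genmxE H.
by rewrite !(eqmx_scale _ c0) submx_refl.
Qed.

Lemma gen_act0 (K : fieldType) n (x : 'rV[K]_n) (M : 'M[K]_n) :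
  x *m M = 0 -> (<<x>> *m M == (0 : 'M[K]_n))%MS.
Proof.
by move=> H; apply/andP; rewrite !(eqmxMr _ (genmxE _)) H !sub0mx.
Qed.

Lemma eq_rv (K : fieldType) n (x y : 'rV[K]_n) :
  (x == y)%MS -> y != 0 -> exists2 a, a != 0 & x = a *: y.
Proof.
case/andP => xy yx y0; case/submxP: xy => D xe.
have x0 : x != 0 by apply: contraNneq y0 => x0; apply/eqP; move: yx; rewrite x0; exact: submx0null.
exists (D 0 0); last by rewrite xe {1}(mx11_scalar D) mul_scalar_mx.
by apply: contraNneq x0 => D0; rewrite xe {1}(mx11_scalar D) D0 mul_scalar_mx scale0r.
Qed.

Section Main.
Variables (K : fieldType) (d : nat).
Local Notation n := d.+1.
Variables (B Bs : 'M[K]_n) (th ths : 'I_n -> K) (P Q : 'I_n -> 'M[K]_n).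
Hypotheses (injA : injective th) (injS : injective ths).
Hypotheses (Ps : \sum_i P i = 1%:M)
  (Pm : forall i j, P i *m P j = (i == j)%:R *: P i)
  (P0 : forall i, P i != 0)
  (PB : forall i, P i *m B = th i *: P i)
  (BP : forall i, B *m P i = th i *: P i).
Hypotheses (Qs : \sum_i Q i = 1%:M)
  (Qm : forall i j, Q i *m Q j = (i == j)%:R *: Q i)
  (Q0 : forall i, Q i != 0)
  (QB : forall i, Q i *m Bs = ths i *: Q i)
  (BQ : forall i, Bs *m Q i = ths i *: Q i).

Definition split_row (U : 'I_n -> 'M[K]_n) :=
  (forall i : 'I_n, (i < d)%N -> (U i *m (B - (th i)%:M) == U (inord i.+1))%MS) /\
  (U ord_max *m (B - (th ord_max)%:M) == (0 : 'M[K]_n))%MS /\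
  (forall i : 'I_n, (0 < i)%N -> (U i *m (Bs - (ths i)%:M) == U (inord i.-1))%MS) /\
  (U ord0 *m (Bs - (ths ord0)%:M) == (0 : 'M[K]_n))%MS.

Lemma dir2 :
  (forall i j : 'I_n, (j.+1 < i)%N -> Q j *m B *m Q i = 0) ->
  (forall i j : 'I_n, i == j.+1 :> nat -> Q j *m B *m Q i != 0) ->
  (forall i j : 'I_n, (i.+1 < j)%N -> P j *m Bs *m P i = 0) ->
  (forall i j : 'I_n, j == i.+1 :> nat -> P j *m Bs *m P i != 0) ->
  exists U, is_decomposition U /\ split_row U.
Proof.
move=> HQ0 HQ1 HP0 HP1.
have [r ηnz] := @nz_row _ _ _ _ (Q0 ord0).
set η := row r (Q ord0) in ηnz.
have ηQ : η *m Q ord0 = η by rewrite -row_mul Qm eqxx scale1r.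
have ηBs : η *m Bs = ths ord0 *: η by rewrite -row_mul QB linearZ.
pose u := fix u k := if k is k'.+1 then u k' *m (B - (th (inord k'))%:M) else η.
have uS : forall k, u k.+1 = u k *m (B - (th (inord k))%:M) by [].
have U1 : forall l (j : 'I_n), (l <= n)%N ->
    u l *m P j = (\prod_(m < l) ((th j - th (inord m)) / 1)) *: (η *m P j).
  move=> l j ln.
  apply: (@chain K n u B (P j) (fun m => th (inord m)) (fun _ => 1) (th j) n) => //.
  - by move=> m _; rewrite scale1r.
  - by move=> m _; rewrite oner_eq0.
have UP0 : forall l (j : 'I_n), (j < l)%N -> (l <= n)%N -> u l *m P j = 0.
  move=> l j jl ln; rewrite U1 //; apply/eqP; rewrite scalemx_eq0; apply/orP; left.
  by apply/prodf_eq0; exists (Ordinal jl) => //=; rewrite inord_val subrr mul0r.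
have uBmx : forall k (X : 'M[K]_n), u k.+1 *m X = u k *m B *m X - th (inord k) *: (u k *m X).
  by move=> k X; rewrite uS mulmxBr mulmxBl mul_mx_scalar -scalemxAl.
have U2 : forall k, (k <= d)%N ->
    (forall j : 'I_n, (k < j)%N -> u k *m Q j = 0) /\ u k *m Q (inord k) != 0.
  elim=> [|k IH] kd.
    split.
      move=> j j0; rewrite /= -ηQ -mulmxA Qm.
      have -> : (ord0 == j) = false by apply/negbTE; rewrite -val_eqE /=; lia.
      by rewrite scale0r mulmx0.
    have -> : inord 0 = ord0 :> 'I_n by apply: val_inj; rewrite /= inordK.
    by rewrite /= ηQ.
  have [IHz IHnz] := IH (ltnW kd).
  set k' := inord k : 'I_n.
  have kk : (k' : nat) = k by rewrite inordK //; lia.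
  have key : forall j : 'I_n, (k.+1 <= j)%N ->
      u k *m B *m Q j = u k *m Q k' *m B *m Q j.
    move=> j kj.
    rewrite -[u k in LHS]mulmx1 -Qs mulmx_sumr !mulmx_suml (bigD1 k') //=.
    rewrite big1 ?addr0 // => l lk.
    case: (ltngtP k l) => [kl|lk'|e].
    - by rewrite IHz // !mul0mx.
    - by rewrite -!mulmxA (mulmxA (Q l)) HQ0 ?mulmx0 //; lia.
    - have el : l = k' by apply: val_inj; rewrite /= kk e.
      by rewrite el eqxx in lk.
  split.
    move=> j kj; rewrite uBmx IHz ?scaler0 ?subr0; last by lia.
    by rewrite key 1?ltnW // -!mulmxA (mulmxA (Q k')) HQ0 ?mulmx0 //; rewrite kk.
  set j := inord k.+1 : 'I_n.
  have jj : (j : nat) = k.+1 by rewrite inordK //; lia.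
  rewrite uBmx IHz ?scaler0 ?subr0 ?jj // key ?jj //.
  rewrite -mulmxA; apply: (@rank1_nz K d Q Qs Qm Q0 _ _ k').
  - exact: submxMl.
  - exact: IHnz.
  - by rewrite mulmxA; apply: HQ1; rewrite jj kk.
pose uo (k : 'I_n) := u k.
have kd : forall k : 'I_n, (k <= d)%N by move=> k; rewrite -ltnS.
have Hup : forall l k : 'I_n, (l < k)%N -> uo l *m Q k = 0.
  by move=> l k lk; apply: (U2 l (kd l)).1.
have Hdg : forall l : 'I_n, uo l *m Q l != 0.
  by move=> l; have := (U2 l (kd l)).2; rewrite inord_val.
have indep : forall c : 'I_n -> K, \sum_k c k *: uo k = 0 -> forall k, c k = 0.
  move=> c H k; apply: (@tri_down K d uo Q c 0) => // k' _.
  by rewrite H mul0mx.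
have span := @span_of_indep K d uo indep.
have ηP : forall k, η *m P k != 0.
  move=> k; apply/negP => /eqP e; apply: (negP (P0 k)); apply/eqP.
  apply: (@zero_of_span K d uo _ _ span) => l.
  by rewrite /uo U1 ?e ?scaler0 // ltnW.
have Hlo : forall l k : 'I_n, (k < l)%N -> uo l *m P k = 0.
  by move=> l k kl; rewrite /uo UP0 // ltnW.
have Hdg' : forall l : 'I_n, uo l *m P l != 0.
  move=> l; have lnl : (l <= n)%N := ltnW (ltn_ord l).
  rewrite /uo (U1 _ _ lnl) scalemx_eq0 negb_or ηP andbT.
  apply/prodf_neq0 => m _; rewrite divr1 subr_eq0; apply/eqP => /injA.
  move/(congr1 val); rewrite /= inordK; last exact: ltn_trans (ltn_ord m) (ltn_ord l).
  by move=> e; move: (ltn_ord m); rewrite -e ltnn.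
have unz : forall l : 'I_n, uo l != 0.
  by move=> l; apply: contraNneq (Hdg l) => ->; rewrite mul0mx.
have Hsum : (\sum_i <<uo i>> == 1%:M)%MS.
  apply/andP; split; first exact: submx1.
  apply/row_subP => r0; have [c ->] := span (row r0 1%:M).
  by apply: summx_sub_sums => i _; rewrite genmxE scalemx_sub.
exists (fun i => <<uo i>>%MS); split.
  split; first by move=> i; rewrite genmxE rank_rV unz.
  split => //.
  rewrite mxdirectE /= (eqmx_rank Hsum) mxrank1.
  under eq_bigr do rewrite genmxE rank_rV unz.
  by rewrite sum1_card card_ord.
split.
  move=> i id; apply: (@gen_act _ _ _ _ _ 1); rewrite ?oner_eq0 // scale1r.
  by rewrite /uo inordK // uS inord_val.
split.
  apply: gen_act0; rewrite /uo.
  have om : (ord_max : 'I_n) = inord d by apply: val_inj; rewrite /= inordK.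
  have -> : u (ord_max : 'I_n) *m (B - (th ord_max)%:M) = u d.+1.
    by rewrite uS -om.
  rewrite (@decomp K d P Ps _ (u d.+1)) big1 // => j _.
  by rewrite UP0.
split; last first.
  apply: gen_act0; rewrite /uo /= mulmxBr ηBs mul_mx_scalar subrr.
  by [].
move=> i i0.
set x := uo i *m (Bs - (ths i)%:M).
set i' := inord i.-1 : 'I_n.
have ii : (i' : nat) = i.-1.
  by rewrite inordK // (leq_ltn_trans (leq_pred i) (ltn_ord i)).
have xQ : forall k : 'I_n, (i <= k)%N -> x *m Q k = 0.
  move=> k ik; rewrite /x -mulmxA mulmxBl BQ mul_scalar_mx -scalerBl -scalemxAr.
  case: (ltngtP i k) => [lt|gt|e].
  - by rewrite Hup ?scaler0.
  - by rewrite ltnNge ik in gt.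
  - have ek : k = i by apply: val_inj.
    by rewrite ek subrr scale0r.
have xP : forall k : 'I_n, (k < i.-1)%N -> x *m P k = 0.
  move=> k ki.
  rewrite /x mulmxBr mulmxBl mul_mx_scalar -scalemxAl Hlo ?scaler0 ?subr0;
    last by rewrite (leq_trans ki) // leq_pred.
  rewrite -[uo i in LHS]mulmx1 -Ps mulmx_sumr !mulmx_suml big1 // => l _.
  case: (ltnP l i) => li; first by rewrite Hlo // !mul0mx.
  rewrite -!mulmxA (mulmxA (P l)) HP0 ?mulmx0 //.
  by apply: (leq_trans _ li); rewrite -(ltn_predK i0) ltnS.
have xPi : x *m P i' != 0.
  rewrite /x mulmxBr mulmxBl mul_mx_scalar -scalemxAl Hlo ?scaler0 ?subr0;
    last by rewrite ii -(ltn_predK i0).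
  rewrite -[uo i in X in X != 0]mulmx1 -Ps mulmx_sumr !mulmx_suml (bigD1 i) //=.
  rewrite big1 ?addr0.
    rewrite -mulmxA; apply: (@rank1_nz K d P Ps Pm P0 _ _ i).
    - exact: submxMl.
    - exact: Hdg'.
    - by rewrite mulmxA; apply: HP1; rewrite ii (ltn_predK i0).
  move=> l li; case: (ltngtP l i) => [lt|gt|e].
  - by rewrite Hlo // !mul0mx.
  - by rewrite -!mulmxA (mulmxA (P l)) HP0 ?mulmx0 // ii (ltn_predK i0).
  - have el : l = i by apply: val_inj.
    by rewrite el eqxx in li.
have [c xc] := span x.
have c1 : forall k : 'I_n, (i <= k)%N -> c k = 0.
  by apply: (@tri_down K d uo Q c i) => // k ik; rewrite -xc xQ.
have c2 : forall k : 'I_n, (k < i.-1)%N -> c k = 0.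
  by apply: (@tri_up K d uo P c i.-1) => // k ik; rewrite -xc xP.
have xe : x = c i' *: uo i'.
  rewrite xc (bigD1 i') //= big1 ?addr0 // => l li.
  case: (ltngtP l i') => [lt|gt|e].
  - by rewrite c2 ?scale0r // -ii.
  - by rewrite c1 ?scale0r // -(ltn_predK i0) -ii.
  - have el : l = i' by apply: val_inj.
    by rewrite el eqxx in li.
apply: (@gen_act _ _ _ _ _ (c i')) => //.
by apply: contraNneq xPi => c0; rewrite xe c0 scale0r mul0mx.
Qed.

Lemma dir1 : (exists U, is_decomposition U /\ split_row U) ->
  ((forall i j : 'I_n, (j.+1 < i)%N -> Q j *m B *m Q i = 0) /\
  (forall i j : 'I_n, i == j.+1 :> nat -> Q j *m B *m Q i != 0)) /\
  ((forall i j : 'I_n, (i.+1 < j)%N -> P j *m Bs *m P i = 0) /\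
  (forall i j : 'I_n, j == i.+1 :> nat -> P j *m Bs *m P i != 0)).
Proof.
case=> U [[Ur [Udx Us]] [S1 [S2 [S3 S4]]]].
have /fin_all_exists [u Hu] : forall i, exists v : 'rV[K]_n, v != 0 /\ (U i == v)%MS.
  move=> i; have U0 : U i != 0 by rewrite -mxrank_eq0 Ur.
  have [r rnz] := @nz_row _ _ _ _ U0; exists (row r (U i)); split => //.
  have rs := row_sub r (U i); rewrite /= rs /=.
  have := mxrank_leqif_sup rs; rewrite Ur rank_rV rnz => -[_ /esym].
  by move=> ->.
have unz : forall i, u i != 0 by move=> i; case: (Hu i).
have Ueq : forall i, (U i :=: u i)%MS by move=> i; case: (Hu i) => _ /eqmxP.
have /fin_all_exists [al Hal] : forall i : 'I_n, exists a, (i < d)%N ->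
    a != 0 /\ u i *m (B - (th i)%:M) = a *: u (inord i.+1).
  move=> i; case: (ltnP i d) => id; last by exists 0.
  have := S1 i id; rewrite !(eqmxMr _ (Ueq i)) !(Ueq (inord _)) => H.
  by have [a a0 e] := @eq_rv _ _ _ _ H (unz _); exists a.
have /fin_all_exists [be Hbe] : forall i : 'I_n, exists a, (0 < i)%N ->
    a != 0 /\ u i *m (Bs - (ths i)%:M) = a *: u (inord i.-1).
  move=> i; case: (posnP i) => i0; first by exists 0; rewrite i0.
  have := S3 i i0; rewrite !(eqmxMr _ (Ueq i)) !(Ueq (inord _)) => H.
  by have [a a0 e] := @eq_rv _ _ _ _ H (unz _); exists a.
have span : forall v : 'rV[K]_n, exists c : 'I_n -> K, v = \sum_k c k *: u k.
  move=> v.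
  have : (v <= \sum_i <<u i>>)%MS.
    apply: submx_trans (submx1 v) _.
    rewrite -(eqmx_sums (fun i _ => eqmx_trans (Ueq i) (eqmx_sym (genmxE _)))).
    by case/andP: Us.
  case/sub_sums_genmxP => a ->; exists (fun k => a k 0 0).
  by apply: eq_bigr => k _; rewrite {1}(mx11_scalar (a k)) mul_scalar_mx.
have kd : forall k : 'I_n, (k <= d)%N by move=> k; rewrite -ltnS.
have Hal' : forall i : 'I_n, (i < d)%N -> al i != 0 by move=> i id; case: (Hal i id).
have Hbe' : forall i : 'I_n, (0 < i)%N -> be i != 0 by move=> i id; case: (Hbe i id).
have Bw : forall l, (l < d)%N ->
    u (inord l) *m (B - (th (inord l))%:M) = al (inord l) *: u (inord l.+1).
  move=> l ld; have ln : (l < n)%N by rewrite ltnS ltnW.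
  have ld' : ((inord l : 'I_n) < d)%N by rewrite inordK.
  by case: (Hal _ ld') => _ ->; rewrite inordK.
have CP : forall (k : 'I_n) l, (l <= d)%N -> u (inord l) *m P k =
    (\prod_(m < l) ((th k - th (inord m)) / al (inord m))) *: (u (inord 0) *m P k).
  move=> k l ld.
  apply: (@chain K n (fun l => u (inord l)) B (P k) (fun m => th (inord m))
     (fun m => al (inord m)) (th k) d) => //.
  by move=> m md; apply: Hal'; rewrite inordK // ltnS ltnW.
have u0P : forall k, u (inord 0) *m P k != 0.
  move=> k; apply/negP => /eqP e; apply: (negP (P0 k)); apply/eqP.
  apply: (@zero_of_span K d u _ _ span) => l.
  by have := CP k l (kd l); rewrite inord_val e scaler0.
have Hlo : forall l k : 'I_n, (k < l)%N -> u l *m P k = 0.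
  move=> l k kl; have := CP k l (kd l); rewrite inord_val => ->.
  apply/eqP; rewrite scalemx_eq0; apply/orP; left; apply/prodf_eq0.
  by exists (Ordinal kl) => //=; rewrite inord_val subrr mul0r.
have Hdg' : forall l : 'I_n, u l *m P l != 0.
  move=> l; have := CP l l (kd l); rewrite inord_val => ->.
  rewrite scalemx_eq0 negb_or u0P andbT; apply/prodf_neq0 => m _.
  have mn : (m < n)%N by apply: ltn_trans (ltn_ord m) (ltn_ord l).
  rewrite mulf_neq0 // ?invr_eq0 ?Hal' ?inordK //; last first.
    by apply: leq_trans (ltn_ord m) (kd l).
  rewrite subr_eq0; apply/eqP => /injA /(congr1 val); rewrite /= inordK //.
  by move=> e; move: (ltn_ord m); rewrite -e ltnn.
have Bsw : forall l, (l < d)%N ->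
    u (inord (d - l)%N) *m (Bs - (ths (inord (d - l)%N))%:M) =
    be (inord (d - l)%N) *: u (inord (d - l.+1)%N).
  move=> l ld; have ln : (d - l < n)%N by rewrite ltnS leq_subr.
  have ld' : (0 < (inord (d - l)%N : 'I_n))%N by rewrite inordK // subn_gt0.
  by case: (Hbe _ ld') => _ ->; rewrite inordK // subnS.
have CQ : forall (k : 'I_n) l, (l <= d)%N -> u (inord (d - l)%N) *m Q k =
    (\prod_(m < l) ((ths k - ths (inord (d - m)%N)) / be (inord (d - m)%N))) *:
      (u (inord (d - 0)%N) *m Q k).
  move=> k l ld.
  apply: (@chain K n (fun l => u (inord (d - l)%N)) Bs (Q k)
     (fun m => ths (inord (d - m)%N)) (fun m => be (inord (d - m)%N)) (ths k) d) => //.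
  by move=> m md; apply: Hbe'; rewrite inordK ?subn_gt0 // ltnS leq_subr.
have udQ : forall k, u (inord (d - 0)%N) *m Q k != 0.
  move=> k; apply/negP => /eqP e; apply: (negP (Q0 k)); apply/eqP.
  apply: (@zero_of_span K d u _ _ span) => l.
  by have := CQ k (d - l)%N (leq_subr _ _); rewrite subKn ?kd // inord_val e scaler0.
have Hup : forall l k : 'I_n, (l < k)%N -> u l *m Q k = 0.
  move=> l k lk; have := CQ k (d - l)%N (leq_subr _ _).
  rewrite subKn ?kd // inord_val => ->.
  have mk : (d - k < d - l)%N by rewrite ltn_sub2l // (leq_trans lk) ?kd.
  apply/eqP; rewrite scalemx_eq0; apply/orP; left; apply/prodf_eq0.
  by exists (Ordinal mk) => //=; rewrite subKn ?kd // inord_val subrr mul0r.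
have Hdg : forall l : 'I_n, u l *m Q l != 0.
  move=> l; have := CQ l (d - l)%N (leq_subr _ _).
  rewrite subKn ?kd // inord_val => ->.
  rewrite scalemx_eq0 negb_or udQ andbT; apply/prodf_neq0 => m _.
  have mn : (d - m < n)%N by rewrite ltnS leq_subr.
  have ml : (l < d - m)%N.
    by have := ltn_ord m; rewrite ltn_subRL addnC -ltn_subRL.
  rewrite mulf_neq0 // ?invr_eq0 ?Hbe' ?inordK //; last first.
    by apply: leq_ltn_trans ml.
  rewrite subr_eq0; apply/eqP => /injS /(congr1 val); rewrite /= inordK //.
  by move=> e; move: ml; rewrite -e ltnn.
have Brel : forall l : 'I_n, (l < d)%N ->
    u l *m B = al l *: u (inord l.+1) + th l *: u l.
  move=> l ld; case: (Hal l ld) => _ e.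
  by rewrite -e mulmxBr mul_mx_scalar subrK.
have Bsrel : forall l : 'I_n, (0 < l)%N ->
    u l *m Bs = be l *: u (inord l.-1) + ths l *: u l.
  move=> l ld; case: (Hbe l ld) => _ e.
  by rewrite -e mulmxBr mul_mx_scalar subrK.
have ordneq : forall a b : 'I_n, (a < b)%N -> (a == b) = false.
  by move=> a b ab; rewrite -val_eqE /= ltn_eqF.
have G1 : forall i j : 'I_n, (j.+1 < i)%N -> Q j *m B *m Q i = 0.
  move=> i j ji; apply/row_matrixP => r; rewrite row0 !row_mul.
  set v := row r (Q j).
  have vQ : forall k : 'I_n, (j.+1 <= k)%N -> v *m Q k = 0.
    by move=> k jk; rewrite /v -row_mul Qm ordneq // scale0r row0.
  have [c vc] := span v.
  have c0 : forall k : 'I_n, (j.+1 <= k)%N -> c k = 0.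
    by apply: (@tri_down K d u Q c j.+1) => // k jk; rewrite -vc vQ.
  rewrite vc !mulmx_suml big1 // => l _; rewrite -!scalemxAl.
  case: (leqP l j) => lj; last by rewrite c0 ?scale0r.
  have jd : (j < d)%N by have := kd i; move: ji; clear; lia.
  have ld : (l < d)%N by apply: leq_ltn_trans lj jd.
  have ln : (l.+1 < n)%N by rewrite ltnS.
  rewrite Brel // mulmxDl -!scalemxAl !Hup ?scaler0 ?addr0 ?scaler0 //; last first.
    by rewrite inordK //; move: lj ji; clear; lia.
  by move: lj ji; clear; lia.
have G3 : forall i j : 'I_n, (i.+1 < j)%N -> P j *m Bs *m P i = 0.
  move=> i j ji; apply/row_matrixP => r; rewrite row0 !row_mul.
  set v := row r (P j).
  have vP : forall k : 'I_n, (k < j)%N -> v *m P k = 0.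
    by move=> k jk; rewrite /v -row_mul Pm eq_sym ordneq // scale0r row0.
  have [c vc] := span v.
  have c0 : forall k : 'I_n, (k < j)%N -> c k = 0.
    by apply: (@tri_up K d u P c j) => // k jk; rewrite -vc vP.
  rewrite vc !mulmx_suml big1 // => l _; rewrite -!scalemxAl.
  case: (ltnP l j) => lj; first by rewrite c0 ?scale0r.
  have l0 : (0 < l)%N by move: ji lj; clear; lia.
  have ln : (l.-1 < n)%N by apply: leq_ltn_trans (leq_pred l) (ltn_ord l).
  rewrite Bsrel // mulmxDl -!scalemxAl !Hlo ?scaler0 ?addr0 ?scaler0 //; last first.
    by rewrite inordK //; move: ji lj; clear; lia.
  by move: ji lj; clear; lia.
split; split => //.
  move=> i j /eqP ij.
  have jd : (j < d)%N by have := ltn_ord i; rewrite ij ltnS.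
  have ei : (inord j.+1 : 'I_n) = i by apply: val_inj; rewrite /= inordK -ij.
  have e1 : u j *m B *m Q i = al j *: (u i *m Q i).
    rewrite Brel // ei mulmxDl -!scalemxAl (Hup j i) ?scaler0 ?addr0 //.
    by rewrite ij.
  have e2 : u j *m B *m Q i = u j *m Q j *m B *m Q i.
    rewrite -[u j in LHS]mulmx1 -Qs mulmx_sumr !mulmx_suml (bigD1 j) //=.
    rewrite big1 ?addr0 // => l lj.
    case: (ltngtP j l) => [jl|lj'|e].
    - by rewrite Hup // !mul0mx.
    - by rewrite -!mulmxA (mulmxA (Q l)) G1 ?mulmx0 // ij.
    - have el : l = j by apply: val_inj.
      by rewrite el eqxx in lj.
  apply/negP => /eqP H0.
  have : al j *: (u i *m Q i) == 0.
    by rewrite -e1 e2 -!mulmxA (mulmxA (Q j)) H0 mulmx0.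
  by rewrite scalemx_eq0 (negbTE (Hal' j jd)) (negbTE (Hdg i)).
move=> i j /eqP ji.
have j0 : (0 < j)%N by rewrite ji.
have ei : (inord j.-1 : 'I_n) = i by rewrite ji /= inord_val.
have e1 : u j *m Bs *m P i = be j *: (u i *m P i).
  rewrite Bsrel // ei mulmxDl -!scalemxAl (Hlo j i) ?scaler0 ?addr0 //.
  by rewrite ji.
have e2 : u j *m Bs *m P i = u j *m P j *m Bs *m P i.
  rewrite -[u j in LHS]mulmx1 -Ps mulmx_sumr !mulmx_suml (bigD1 j) //=.
  rewrite big1 ?addr0 // => l lj.
  case: (ltngtP j l) => [jl|lj'|e].
  - by rewrite -!mulmxA (mulmxA (P l)) G3 ?mulmx0 // -ji.
  - by rewrite Hlo // !mul0mx.
  - have el : l = j by apply: val_inj.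
    by rewrite el eqxx in lj.
apply/negP => /eqP H0.
have : be j *: (u i *m P i) == 0.
  by rewrite -e1 e2 -!mulmxA (mulmxA (P j)) H0 mulmx0.
by rewrite scalemx_eq0 (negbTE (Hbe' j j0)) (negbTE (Hdg' i)).
Qed.
End Main.

Lemma act_tr (K : fieldType) n (M U : 'M[K]_n) c :
  act (M - c%:M) U = U *m (M^T - c%:M).
Proof. by rewrite /act linearB /= tr_scalar_mx. Qed.

Lemma tr3 (K : fieldType) n (X Y Z : 'M[K]_n) :
  X *m Y *m Z = (Z^T *m Y^T *m X^T)^T.
Proof. by rewrite !trmx_mul !trmxK mulmxA. Qed.

Theorem theorem4p1 (K : fieldType) (d : nat) (A As : 'M[K]_(d.+1))
  (th ths : 'I_(d.+1) -> K) :
  mult_free_ordering A th -> mult_free_ordering As ths ->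
  (exists U : 'I_(d.+1) -> 'M[K]_(d.+1),
     is_decomposition U /\ is_split A As th ths U) <->
  ((forall i j : 'I_(d.+1),
      ((j.+1 < i)%N -> prim_idem As ths i *m A *m prim_idem As ths j = 0) /\
      (i == j.+1 :> nat -> prim_idem As ths i *m A *m prim_idem As ths j != 0)) /\
   (forall i j : 'I_(d.+1),
      ((i.+1 < j)%N -> prim_idem A th i *m As *m prim_idem A th j = 0) /\
      (j == i.+1 :> nat -> prim_idem A th i *m As *m prim_idem A th j != 0))).
Proof.
move=> [injA eigA] [injS eigS].
set P := fun i => (prim_idem A th i)^T.
set Q := fun i => (prim_idem As ths i)^T.
have Ps : \sum_i P i = 1%:M by rewrite /P -linear_sum (@pi_sum _ _ A _ injA); exact: trmx1.
have Qs : \sum_i Q i = 1%:M by rewrite /Q -linear_sum (@pi_sum _ _ As _ injS); exact: trmx1.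
have Pm : forall i j, P i *m P j = (i == j)%:R *: P i.
  move=> i j; rewrite /P -trmx_mul (@pidem_mul _ _ _ _ injA eigA) -linearZ /=.
  by case: eqVneq => [->|_]; rewrite ?scale0r.
have Qm : forall i j, Q i *m Q j = (i == j)%:R *: Q i.
  move=> i j; rewrite /Q -trmx_mul (@pidem_mul _ _ _ _ injS eigS) -linearZ /=.
  by case: eqVneq => [->|_]; rewrite ?scale0r.
have P0 : forall i, P i != 0 by move=> i; rewrite /P trmx_eq0 (@pi_neq0 _ _ _ _ injA eigA).
have Q0 : forall i, Q i != 0 by move=> i; rewrite /Q trmx_eq0 (@pi_neq0 _ _ _ _ injS eigS).
have BP : forall i, A^T *m P i = th i *: P i.
  by move=> i; rewrite /P -trmx_mul (@pi_MX _ _ _ _ injA eigA) linearZ.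
have BQ : forall i, As^T *m Q i = ths i *: Q i.
  by move=> i; rewrite /Q -trmx_mul (@pi_MX _ _ _ _ injS eigS) linearZ.
have QB : forall i, Q i *m As^T = ths i *: Q i.
  by move=> i; rewrite /Q -trmx_mul (@pi_XM _ _ _ _ injS eigS) linearZ.
have splitE : forall U, is_split A As th ths U <-> split_row K d A^T As^T th ths U.
  move=> U; rewrite /is_split /split_row; split => -[H1 [H2 [H3 H4]]].
    split; first by move=> i hi; rewrite -act_tr; exact: H1.
    split; first by rewrite -act_tr.
    split; last by rewrite -act_tr.
    by move=> i hi; rewrite -act_tr; exact: H3.
  split; first by move=> i hi; rewrite act_tr; exact: H1.
  split; first by rewrite act_tr.
  split; last by rewrite act_tr.
  by move=> i hi; rewrite act_tr; exact: H3.
split.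
  case=> U [Ud Us].
  have := @dir1 K d A^T As^T th ths P Q injA injS Ps Pm P0 BP Qs Qm Q0 BQ
    (ex_intro _ U (conj Ud (proj1 (splitE U) Us))).
  case=> [[G1 G2] [G3 G4]]; split => i j; split.
  - by move=> ji; rewrite tr3; apply/eqP; rewrite trmx_eq0; apply/eqP; exact: G1.
  - by move=> ij; rewrite tr3 trmx_eq0; exact: G2.
  - by move=> ij; rewrite tr3; apply/eqP; rewrite trmx_eq0; apply/eqP; exact: G3.
  - by move=> ij; rewrite tr3 trmx_eq0; exact: G4.
case=> H1 H2.
have := @dir2 K d A^T As^T th ths P Q injA Ps Pm P0 BP Qs Qm Q0 QB BQ.
case.
- move=> i j ji; apply/eqP; rewrite -trmx_eq0; apply/eqP.
  by have := (H1 i j).1 ji; rewrite tr3.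
- move=> i j ij; rewrite -trmx_eq0.
  by have := (H1 i j).2 ij; rewrite tr3.
- move=> i j ij; apply/eqP; rewrite -trmx_eq0; apply/eqP.
  by have := (H2 i j).1 ij; rewrite tr3.
- move=> i j ij; rewrite -trmx_eq0.
  by have := (H2 i j).2 ij; rewrite tr3.
move=> U [Ud Us]; exists U; split => //; exact/splitE.
Qed.
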